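(* Let $A\in P(n)$, $m\in\mathbb N$, $p_m=(1,\dots,1)^T\in\mathbb C^m$, and let $A^{(m)}=p_mp_m^*\otimes A\in P(nm)$ (the $m\times m$ block matrix all of whose blocks equal $A$). Then $I(A^{(m)})=I(A)$ and $I(sp,A^{(m)})=I(sp,A)$.
   Context: $P(k)$ denotes positive semidefinite complex $k\times k$ matrices; $\otimes$ is the Kronecker product; $\circ$ is the Hadamard (entrywise) product. For $C\in P(k)$, with $P_k$ the all-ones $k\times k$ matrix, $I(C)=\max\{\lambda\ge0: C-\lambda P_k\ge0\}$, and $I(sp,C)=\min\{\|C\circ B\|: B\in P(k),\ \|B\|=1\}$, where $\|\cdot\|$ is the spectral (operator) norm. *)

(* Defs.v *)
From HB Require Import structures.
From mathcomp Require Import all_boot all_order all_algebra.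
From mathcomp Require Import classical_sets reals.
From mathcomp Require Import complex mxtens.

Set Implicit Arguments.
Unset Strict Implicit.
Unset Printing Implicit Defensive.

Import Order.TTheory GRing.Theory Num.Theory.
Local Open Scope ring_scope.
Local Open Scope classical_set_scope.

Section Defs.
Variable R : realType.

Definition adjmx {k l : nat} (M : 'M[R[i]]_(k, l)) : 'M[R[i]]_(l, k) :=
  \matrix_(a, b) conjc (M b a).

(* P(k): positive semidefinite complex k x k matrices:
   x^* C x >= 0 (as an element of C, i.e. real and nonnegative) for all x. *)
Definition psd {k : nat} (C : 'M[R[i]]_k) : Prop :=
  forall x : 'cV[R[i]]_k, 0 <= (adjmx x *m C *m x) 0 0.

Definition onesmx (k : nat) : 'M[R[i]]_k := const_mx 1.

Definition hadamard {k : nat} (C B : 'M[R[i]]_k) : 'M[R[i]]_k :=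
  \matrix_(a, b) (C a b * B a b).

Definition vnorm {k : nat} (x : 'cV[R[i]]_k) : R :=
  Num.sqrt (\sum_(a < k) ComplexField.Normc.normc (x a 0) ^+ 2).

Definition opnorm {k : nat} (M : 'M[R[i]]_k) : R :=
  sup [set vnorm (M *m x) | x in [set x : 'cV[R[i]]_k | vnorm x = 1]].

Definition Iidx {k : nat} (C : 'M[R[i]]_k) : R :=
  sup [set lam : R | 0 <= lam /\ psd (C - (lam%:C)%C *: onesmx k)].

Definition Isp {k : nat} (C : 'M[R[i]]_k) : R :=
  inf [set opnorm (hadamard C B) | B in [set B : 'M[R[i]]_k | psd B /\ opnorm B = 1]].

End Defs.

Definition blockrep {R : realType} (m : nat) {n : nat} (A : 'M[R[i]]_n)
  : 'M[R[i]]_(m * n) := tensmx (onesmx R m) A.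

(* Main.v *)
Require Import Defs.
From HB Require Import structures.
From mathcomp Require Import all_boot all_order all_algebra.
From mathcomp Require Import boolp classical_sets reals.
From mathcomp Require Import complex mxtens.
From mathcomp Require Import sesquilinear spectral.
From mathcomp Require Import ring lra.
Set Implicit Arguments.
Unset Strict Implicit.
Unset Printing Implicit Defensive.
Import Order.TTheory GRing.Theory Num.Theory.
Local Open Scope ring_scope.

Section Aux.
Variable R : realType.
Local Notation C := R[i].

Lemma conjcE (x : C) : conjc x = x^*%R.
Proof.
have := sqr_normc x; rewrite normCK => E.
have [->|nz] := eqVneq x 0; first by rewrite conjC0 conjc0.
by apply: (mulfI nz); rewrite -E.
Qed.

Lemma normcC (x : C) : (ComplexField.Normc.normc x)%:C%C = `|x|.
Proof. by case: x => a b; rewrite normc_def. Qed.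

Lemma adjmxE k l (M : 'M[C]_(k, l)) : adjmx M = map_mx Num.conj (M^T).
Proof. by apply/matrixP => a b; rewrite !mxE conjcE. Qed.

Lemma adjmxD k l (M N : 'M[C]_(k, l)) : adjmx (M + N) = adjmx M + adjmx N.
Proof. by apply/matrixP => a b; rewrite !mxE !conjcE rmorphD. Qed.

Lemma adjmxZ k l (a : C) (M : 'M[C]_(k, l)) : adjmx (a *: M) = a^* *: adjmx M.
Proof. by apply/matrixP => i j; rewrite !mxE !conjcE rmorphM. Qed.

Lemma adjmxM k l p (M : 'M[C]_(k, l)) (N : 'M[C]_(l, p)) :
  adjmx (M *m N) = adjmx N *m adjmx M.
Proof. by rewrite !adjmxE trmx_mul map_mxM. Qed.

Lemma adjmxK k l (M : 'M[C]_(k, l)) : adjmx (adjmx M) = M.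
Proof. by apply/matrixP => i j; rewrite !mxE !conjcE conjCK. Qed.

Definition bf k (Q : 'M[C]_k) (v u : 'cV[C]_k) : C := (adjmx v *m Q *m u) 0 0.
Definition qf k (Q : 'M[C]_k) (x : 'cV[C]_k) : C := bf Q x x.

Lemma psdP k (Q : 'M[C]_k) : psd Q <-> forall x, 0 <= qf Q x.
Proof. by []. Qed.

Lemma bfDl k (Q : 'M[C]_k) v1 v2 u : bf Q (v1 + v2) u = bf Q v1 u + bf Q v2 u.
Proof. by rewrite /bf adjmxD !mulmxDl mxE. Qed.
Lemma bfDr k (Q : 'M[C]_k) v u1 u2 : bf Q v (u1 + u2) = bf Q v u1 + bf Q v u2.
Proof. by rewrite /bf mulmxDr mxE. Qed.
Lemma bfZl k (Q : 'M[C]_k) a v u : bf Q (a *: v) u = a^* * bf Q v u.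
Proof. by rewrite /bf adjmxZ -!scalemxAl mxE. Qed.
Lemma bfZr k (Q : 'M[C]_k) a v u : bf Q v (a *: u) = a * bf Q v u.
Proof. by rewrite /bf -!scalemxAr mxE. Qed.

Lemma qfD k (Q : 'M[C]_k) u v :
  qf Q (u + v) = qf Q u + qf Q v + (bf Q u v + bf Q v u).
Proof. rewrite /qf bfDl !bfDr; ring. Qed.

Lemma psd_bf k (Q : 'M[C]_k) : psd Q -> forall u v, bf Q u v = (bf Q v u)^*.
Proof.
move=> H u v; set a := bf Q u v; set b := bf Q v u.
have r1 : (a + b)^* = a + b.
  have : a + b = qf Q (u + v) - qf Q u - qf Q v by rewrite qfD /a /b; ring.
  move=> ->; apply/eqP; rewrite -CrealE.
  by rewrite !rpredB ?ger0_real ?H.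
have r2 : ('i * a - 'i * b)^* = 'i * a - 'i * b.
  have : 'i * a - 'i * b = qf Q (u + 'i *: v) - qf Q u - qf Q ('i *: v).
    rewrite qfD /a /b bfZl bfZr conjCi; ring.
  move=> ->; apply/eqP; rewrite -CrealE.
  by rewrite !rpredB ?ger0_real ?H.
move: r1 r2; rewrite rmorphD rmorphB !rmorphM /= conjCi => r1 r2.
have r3 : - a^* + b^* = a - b.
  apply: (mulfI (neq0Ci C)); rewrite mulrDr mulrBr -r2; ring.
have h2 : (2%:R : C) != 0 by rewrite pnatr_eq0.
apply: (mulfI h2).
have -> : 2%:R * a = (a + b) + (a - b) by ring.
rewrite -r1 -r3; ring.
Qed.

Lemma real_disc (r s p : R) : 0 <= r -> 0 <= p -> 0 <= s ->
  (forall t : R, 0 <= r - 2%:R * t * s + t ^+ 2 * s * p) -> s <= r * p.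
Proof.
move=> r0 p0 s0 H.
have [p_eq0|p_gt0] := eqVneq p 0.
  have [s_eq0|s_gt0] := eqVneq s 0; first by rewrite s_eq0 p_eq0 mulr0.
  have sp : 0 < s by rewrite lt_def s_gt0 s0.
  have := H ((r + 1) / s); rewrite p_eq0 mulr0 addr0.
  have -> : 2%:R * ((r + 1) / s) * s = 2%:R * (r + 1).
    by field; rewrite gt_eqF.
  move=> h; exfalso; move: h; apply/negP; rewrite -ltNge; lra.
have pp : 0 < p by rewrite lt_def p_gt0 p0.
have := H p^-1.
have -> : r - 2%:R * p^-1 * s + p^-1 ^+ 2 * s * p = (r * p - s) / p.
  by field; rewrite gt_eqF.
by rewrite pmulr_lge0 ?invr_gt0 // subr_ge0.
Qed.

Lemma conjR (t : R) : (t%:C%C)^* = t%:C%C :> C.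
Proof. by rewrite -conjcE conjc_real. Qed.

Lemma ge0_realC (z : C) : 0 <= z -> z = (complex.Re z)%:C%C.
Proof. by move=> h; rewrite RRe_real // ger0_real. Qed.

Lemma psd_CS k (Q : 'M[C]_k) u v : psd Q ->
  `|bf Q v u| ^+ 2 <= qf Q u * qf Q v.
Proof.
move=> H; set c := bf Q v u.
have cu : bf Q u v = c^* by rewrite (psd_bf H).
have Hu := H u; have Hv := H v.
set r := complex.Re (qf Q u); set p := complex.Re (qf Q v).
set s := ComplexField.Normc.normc c ^+ 2.
have ec : c * c^* = s%:C%C by rewrite -normCK -normcC rmorphXn.
have eu : qf Q u = r%:C%C by apply: ge0_realC.
have ev : qf Q v = p%:C%C by apply: ge0_realC.
clearbody r p s.
have key : forall t : R, 0 <= r - 2%:R * t * s + t ^+ 2 * s * p.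
  move=> t; rewrite -ler0c.
  have Hq : forall x, 0 <= qf Q x := H.
  have := Hq (u + (- (t%:C%C * c)) *: v).
  rewrite qfD {2}/qf !bfZr !bfZl cu -/(qf Q v) -/c.
  rewrite !rmorphN rmorphM /= conjR.
  have -> : qf Q u + - (t%:C%C * c) * (- (t%:C%C * c^*) * qf Q v) +
    (- (t%:C%C * c) * c^* + - (t%:C%C * c^*) * c) = 
    qf Q u - 2%:R * t%:C%C * (c * c^*) + t%:C%C ^+ 2 * (c * c^*) * qf Q v.
    ring.
  rewrite ec eu ev rmorphD rmorphB !rmorphM rmorph_nat.
  exact: id.
have r0 : 0 <= r by rewrite -ler0c -eu; exact: Hu.
have p0 : 0 <= p by rewrite -ler0c -ev; exact: Hv.
have s0 : 0 <= s by rewrite -ler0c -ec mul_conjC_ge0.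
have := real_disc r0 p0 s0 key => h.
by rewrite normCK ec eu ev -rmorphM lecR.
Qed.

Local Notation normc := ComplexField.Normc.normc.

Lemma normc_ge0 (z : C) : 0 <= normc z.
Proof. by rewrite -ler0c normcC. Qed.

Lemma normc_sqC (z : C) : (normc z ^+ 2)%:C%C = z^* * z.
Proof. by rewrite rmorphXn /= normcC normCK mulrC. Qed.

Definition nsq k (x : 'cV[C]_k) : R := \sum_a normc (x a 0) ^+ 2.

Lemma nsq_ge0 k (x : 'cV[C]_k) : 0 <= nsq x.
Proof. by apply: sumr_ge0 => a _; rewrite sqr_ge0. Qed.

Lemma vnormE k (x : 'cV[C]_k) : vnorm x = Num.sqrt (nsq x).
Proof. by []. Qed.

Lemma vnorm_ge0 k (x : 'cV[C]_k) : 0 <= vnorm x.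
Proof. exact: sqrtr_ge0. Qed.

Lemma vnorm_sq k (x : 'cV[C]_k) : vnorm x ^+ 2 = nsq x.
Proof. by rewrite vnormE sqr_sqrtr ?nsq_ge0. Qed.

Lemma vnorm_le k l (x : 'cV[C]_k) (y : 'cV[C]_l) :
  (vnorm x <= vnorm y) = (nsq x <= nsq y).
Proof. by rewrite !vnormE ler_sqrt ?nsq_ge0. Qed.

Lemma bfE k (Q : 'M[C]_k) v u :
  bf Q v u = \sum_a \sum_b (v a 0)^* * Q a b * u b 0.
Proof.
rewrite /bf mxE exchange_big /=; apply: eq_bigr => b _.
rewrite mxE big_distrl /=; apply: eq_bigr => a _.
by rewrite !mxE conjcE.
Qed.

Lemma bf1E k (v u : 'cV[C]_k) : bf 1%:M v u = \sum_a (v a 0)^* * u a 0.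
Proof.
rewrite bfE; apply: eq_bigr => a _.
rewrite (bigD1 a) //= big1 ?addr0; first by rewrite mxE eqxx mulr1.
by move=> b /negbTE nb; rewrite mxE eq_sym nb mulr0 mul0r.
Qed.

Lemma nsqC k (x : 'cV[C]_k) : (nsq x)%:C%C = qf 1%:M x.
Proof.
rewrite /qf bf1E /nsq rmorph_sum /=; apply: eq_bigr => a _.
by rewrite normc_sqC.
Qed.

Lemma psd1 k : psd (1%:M : 'M[C]_k).
Proof. by move=> x; have := nsqC x; rewrite /qf /bf => <-; rewrite ler0c nsq_ge0. Qed.

Lemma CS1 k (v u : 'cV[C]_k) : normc (bf 1%:M v u) ^+ 2 <= nsq u * nsq v.
Proof.
rewrite -lecR rmorphXn /= normcC rmorphM /= !nsqC; exact: psd_CS (@psd1 k).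
Qed.

Lemma nsq_eq0 k (x : 'cV[C]_k) : nsq x = 0 -> x = 0.
Proof.
move=> h; apply/matrixP => a b; rewrite [b]ord1 mxE.
have := psumr_eq0P (fun i _ => sqr_ge0 (normc (x i 0))) h (i:=a) isT.
by move/eqP; rewrite sqrf_eq0 => /eqP /ComplexField.Normc.eq0_normc.
Qed.

Lemma nsqZ k (c : C) (x : 'cV[C]_k) : nsq (c *: x) = normc c ^+ 2 * nsq x.
Proof.
rewrite /nsq mulr_sumr; apply: eq_bigr => a _.
by rewrite mxE ComplexField.Normc.normcM exprMn.
Qed.

Lemma normcR (t : R) : normc (t%:C%C) = `|t|.
Proof. by apply: (@complexI R); rewrite normcC normc_def /= expr0n addr0 sqrtr_sqr. Qed.

Definition Kb k (M : 'M[C]_k) : R := \sum_a \sum_b normc (M a b) ^+ 2.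

Lemma nsq_mul_bound k (M : 'M[C]_k) x : nsq (M *m x) <= Kb M * nsq x.
Proof.
rewrite /nsq /Kb mulr_suml; apply: ler_sum => a _.
pose r := \col_b (M a b)^*.
have -> : (M *m x) a 0 = bf 1%:M r x.
  rewrite bf1E mxE; apply: eq_bigr => b _; by rewrite mxE conjCK.
apply: (le_trans (CS1 r x)); rewrite mulrC ler_wpM2r ?nsq_ge0 //.
rewrite le_eqVlt; apply/orP; left; apply/eqP; rewrite /nsq; apply: eq_bigr => b _.
by rewrite mxE -conjcE; case: (M a b) => p q /=; rewrite sqrrN.
Qed.

Local Open Scope classical_set_scope.

Lemma opnorm_hasub k (M : 'M[C]_k) :
  has_ubound [set vnorm (M *m x) | x in [set x : 'cV[C]_k | vnorm x = 1]].
Proof.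
exists (Num.sqrt (Kb M)) => y [x /= x1 <-].
rewrite vnormE ler_sqrt; last by apply: sumr_ge0 => a _; apply: sumr_ge0 => b _; rewrite sqr_ge0.
by rewrite -(mulr1 (Kb M)) -[1](expr1n _ 2) -x1 vnorm_sq nsq_mul_bound.
Qed.

Lemma opnorm_ge0 k (M : 'M[C]_k) : 0 <= opnorm M.
Proof.
rewrite /opnorm.
have [[x x1]|none] := pselect (exists x : 'cV[C]_k, vnorm x = 1).
  apply: le_trans (vnorm_ge0 (M *m x)) _.
  by apply: ub_le_sup (opnorm_hasub M) _ _; exists x.
suff -> : [set vnorm (M *m x) | x in [set x : 'cV[C]_k | vnorm x = 1]] = set0.
  by rewrite sup0.
by apply/seteqP; split => // y [x /= x1 _]; apply: none; exists x.
Qed.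

Lemma vnormZR k (t : R) (x : 'cV[C]_k) : vnorm (t%:C%C *: x) = `|t| * vnorm x.
Proof.
by rewrite !vnormE nsqZ normcR sqrtrM ?sqr_ge0 // sqrtr_sqr normr_id.
Qed.

Lemma opnorm_bound k (M : 'M[C]_k) x : vnorm (M *m x) <= opnorm M * vnorm x.
Proof.
have [/eqP x0|xn0] := boolP (vnorm x == 0).
  have : x = 0 by apply: nsq_eq0; rewrite -vnorm_sq x0 expr0n.
  by move=> xz; rewrite x0 mulr0 xz mulmx0 vnormE /nsq big1 ?sqrtr0 // => a _; rewrite mxE ComplexField.Normc.normc0 expr0n.
have vp : 0 < vnorm x by rewrite lt_def xn0 vnorm_ge0.
set x' := ((vnorm x)^-1)%:C%C *: x.
have x'1 : vnorm x' = 1 by rewrite vnormZR ger0_norm ?invr_ge0 ?vnorm_ge0 // mulVf.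
have : vnorm (M *m x') <= opnorm M.
  by apply: ub_le_sup (opnorm_hasub M) _ _; exists x'.
rewrite -scalemxAr vnormZR ger0_norm ?invr_ge0 ?vnorm_ge0 //.
by rewrite mulrC ler_pdivrMr.
Qed.

Lemma opnorm_le k (M : 'M[C]_k) (c : R) : 0 <= c ->
  (forall x, vnorm x = 1 -> vnorm (M *m x) <= c) -> opnorm M <= c.
Proof.
move=> c0 H; rewrite /opnorm.
have [[x x1]|none] := pselect (exists x : 'cV[C]_k, vnorm x = 1).
  apply: ge_sup; first by exists (vnorm (M *m x)), x.
  by move=> y [z /= z1 <-]; apply: H.
suff -> : [set vnorm (M *m x) | x in [set x : 'cV[C]_k | vnorm x = 1]] = set0.
  by rewrite sup0.
by apply/seteqP; split => // y [x /= x1 _]; apply: none; exists x.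
Qed.

Lemma bf_delta k (Q : 'M[C]_k) a b :
  bf Q (delta_mx a 0) (delta_mx b 0) = Q a b.
Proof.
rewrite bfE (bigD1 a) //= [X in _ + X]big1 ?addr0; last first.
  move=> c ca; apply: big1 => d _; rewrite mxE (negbTE ca) /= conjC0; ring.
rewrite (bigD1 b) //= [X in _ + X]big1 ?addr0; last first.
  by move=> c cb; rewrite (mxE _ _ c) (negbTE cb) mulr0.
by rewrite !mxE !eqxx /= conjC1 mul1r mulr1.
Qed.

Lemma psd_herm k (Q : 'M[C]_k) : psd Q -> adjmx Q = Q.
Proof.
move=> H; apply/matrixP => a b; rewrite mxE conjcE.
by rewrite -!bf_delta [in RHS](psd_bf H).
Qed.

Lemma psd_spectral k (Q : 'M[C]_k) : psd Q -> exists U (d : 'rV[C]_k),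
  [/\ adjmx U *m U = 1%:M, U *m adjmx U = 1%:M,
      Q = U *m diag_mx d *m adjmx U & forall j, 0 <= d 0 j].
Proof.
move=> H; have herm := psd_herm H.
have normal : Q \is normalmx by apply/normalmxP; rewrite -adjmxE herm.
have E := orthomx_spectralP normal.
set P := spectralmx Q in E; set dd := spectral_diag Q in E.
have Pu : P \is unitarymx := spectral_unitarymx Q.
have PP : P *m adjmx P = 1%:M by rewrite adjmxE; apply/unitarymxP.
have iP : invmx P = adjmx P by rewrite adjmxE invmx_unitary.
have unitP : P \in unitmx := unitarymx_unit Pu.
exists (adjmx P), dd; split.
- by rewrite adjmxK.
- by rewrite adjmxK -iP mulVmx.
- by rewrite adjmxK -iP.
move=> j.
pose e : 'cV[C]_k := delta_mx j 0.
have : qf Q (adjmx P *m e) = dd 0 j.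
  rewrite /qf /bf adjmxM adjmxK [X in _ *m X *m _]E iP.
  have -> : adjmx e *m P *m (adjmx P *m diag_mx dd *m P) *m
     (adjmx P *m e) = adjmx e *m diag_mx dd *m e.
    by rewrite !mulmxA -!(mulmxA _ P (adjmx P)) PP !mulmx1.
  by rewrite -/(bf _ _ _) bf_delta mxE eqxx mulr1n.
by move=> <-; apply: H.
Qed.

Lemma decompE k (U : 'M[C]_k) (d : 'rV[C]_k) a b :
  (U *m diag_mx d *m adjmx U) a b = \sum_j U a j * d 0 j * (U b j)^*.
Proof.
by rewrite mxE; apply: eq_bigr => j _; rewrite mul_mx_diag !mxE conjcE.
Qed.

Lemma schur k (Cm Q : 'M[C]_k) : psd Cm -> psd Q -> psd (hadamard Cm Q).
Proof.
move=> HC HQ z; have [U [d [_ _ QE d0]]] := psd_spectral HQ.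
pose w j : 'cV[C]_k := \col_a ((U a j)^* * z a 0).
have -> : (adjmx z *m hadamard Cm Q *m z) 0 0 = \sum_j d 0 j * qf Cm (w j).
  rewrite -/(bf _ z z) bfE.
  transitivity (\sum_a \sum_b \sum_j
      (z a 0)^* * Cm a b * (U a j * d 0 j * (U b j)^*) * z b 0).
    apply: eq_bigr => a _; apply: eq_bigr => b _.
    rewrite mxE QE decompE !big_distrr /= big_distrl /=.
    by apply: eq_bigr => j _; ring.
  symmetry; under eq_bigr => j _ do rewrite /qf bfE big_distrr /=.
  rewrite exchange_big /=; apply: eq_bigr => a _.
  under eq_bigr => j _ do rewrite big_distrr /=.
  rewrite exchange_big /=; apply: eq_bigr => b _.
  apply: eq_bigr => j _; rewrite !mxE rmorphM /= conjCK; ring.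
by apply: sumr_ge0 => j _; apply: mulr_ge0; [exact: d0 | exact: HC].
Qed.

Lemma sum_tens (V : zmodType) m n (F : 'I_(m * n) -> V) :
  \sum_k F k = \sum_(i < m) \sum_(a < n) F (mxtens_index (i, a)).
Proof.
rewrite pair_big /= (reindex (@mxtens_index m n)) /=; last first.
  by exists (@mxtens_unindex m n) => k _; rewrite (mxtens_indexK, mxtens_unindexK).
by apply: eq_bigr => -[i a].
Qed.

Definition bsum m n (x : 'cV[C]_(m * n)) : 'cV[C]_n :=
  \col_a \sum_(i < m) x (mxtens_index (i, a)) 0.

Lemma qf_tens m n (B : 'M[C]_n) x :
  qf (tensmx (onesmx R m) B) x = qf B (bsum x).
Proof.
rewrite /qf !bfE sum_tens.
transitivity (\sum_(i < m) \sum_(a < n) \sum_(j < m) \sum_(b < n)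
   (x (mxtens_index (i, a)) 0)^* * B a b * x (mxtens_index (j, b)) 0).
  apply: eq_bigr => i _; apply: eq_bigr => a _; rewrite sum_tens.
  apply: eq_bigr => j _; apply: eq_bigr => b _.
  by rewrite tensmxE mxE mul1r.
rewrite exchange_big /=; apply: eq_bigr => a _.
under eq_bigr => i _ do rewrite exchange_big /=.
rewrite exchange_big /=; apply: eq_bigr => b _.
rewrite !mxE rmorph_sum /= big_distrl /= big_distrr /=.
under [RHS]eq_bigr => i _ do rewrite big_distrl /=.
by rewrite [RHS]exchange_big.
Qed.

Lemma psd_tens m n (B : 'M[C]_n) : (0 < m)%N ->
  psd (tensmx (onesmx R m) B) <-> psd B.
Proof.
move=> m0; split => H y.
  pose i0 : 'I_m := Ordinal m0.
  pose x : 'cV[C]_(m * n) := \col_k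
    (if (mxtens_unindex k).1 == i0 then y (mxtens_unindex k).2 0 else 0).
  have -> : y = bsum x.
    apply/matrixP => a b; rewrite [b]ord1 !mxE (bigD1 i0) //= big1 ?addr0.
      by rewrite mxE mxtens_indexK eqxx.
    by move=> i ni; rewrite mxE mxtens_indexK /= (negbTE ni).
  by have := H x; move: (qf_tens B x); rewrite /qf /bf => ->.
by move: (qf_tens B y); rewrite /qf /bf => ->; apply: H.
Qed.

Lemma blockrep_sub m n (A : 'M[C]_n) (c : C) :
  blockrep m A - c *: onesmx R (m * n) = tensmx (onesmx R m) (A - c *: onesmx R n).
Proof. by apply/matrixP => k l; rewrite !mxE; ring. Qed.

Lemma Iidx_blockrep m n (A : 'M[C]_n) : (0 < m)%N -> Iidx (blockrep m A) = Iidx A.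
Proof.
move=> m0; rewrite /Iidx; congr sup; apply/seteqP; split => lam /= [l0 H]; split => //.
  by rewrite -(psd_tens _ m0) -blockrep_sub.
by rewrite blockrep_sub psd_tens.
Qed.

Lemma opnorm_bound2 k (M : 'M[C]_k) x : nsq (M *m x) <= opnorm M ^+ 2 * nsq x.
Proof.
rewrite -!vnorm_sq -exprMn ler_pXn2r ?nnegrE ?vnorm_ge0 ?mulr_ge0 ?opnorm_ge0 //.
all: first [exact: opnorm_bound | exact: vnorm_ge0].
Qed.

Lemma vnorm_le_c k (x : 'cV[C]_k) (c : R) : 0 <= c -> nsq x <= c ^+ 2 -> vnorm x <= c.
Proof.
move=> c0 h; rewrite vnormE -(ger0_norm c0) -sqrtr_sqr ler_sqrt ?sqr_ge0 // real_normK // ger0_real.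
Qed.

Lemma qfZ k (M : 'M[C]_k) (c : C) x : qf (c *: M) x = c * qf M x.
Proof. by rewrite /qf /bf -scalemxAr -scalemxAl mxE. Qed.

Lemma qfB k (M N : 'M[C]_k) x : qf (M - N) x = qf M x - qf N x.
Proof. by rewrite /qf /bf mulmxBr mulmxBl [LHS]mxE [X in _ + X]mxE. Qed.

Lemma psd_scale k (M : 'M[C]_k) (c : C) : 0 <= c -> psd M -> psd (c *: M).
Proof.
move=> c0 H x; have := qfZ M c x; rewrite /qf /bf => ->.
by apply: mulr_ge0 => //; apply: H.
Qed.

Lemma qf_had_rank1 k (M : 'M[C]_k) (x v : 'cV[C]_k) :
  qf (hadamard M (x *m adjmx x)) v = qf M (\col_j ((x j 0)^* * v j 0)).
Proof.
rewrite /qf !bfE; apply: eq_bigr => a _; apply: eq_bigr => b _.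
rewrite !mxE big_ord1 !mxE -conjcE rmorphM /= conjCK; ring.
Qed.

Lemma nsq_tens m n (x : 'cV[C]_(m * n)) :
  nsq x = \sum_(i < m) \sum_(a < n) normc (x (mxtens_index (i, a)) 0) ^+ 2.
Proof. by rewrite /nsq sum_tens. Qed.

Lemma nsq_isom k (U : 'M[C]_k) v : adjmx U *m U = 1%:M -> nsq (U *m v) = nsq v.
Proof.
move=> UU; apply: (@complexI R); rewrite !nsqC /qf /bf adjmxM.
by rewrite mulmx1 -mulmxA (mulmxA (adjmx U)) UU mul1mx mulmx1.
Qed.

Lemma bsum_bound m n (x : 'cV[C]_(m * n)) : nsq (bsum x) <= m%:R * nsq x.
Proof.
rewrite nsq_tens exchange_big /= /nsq mulr_sumr; apply: ler_sum => a _.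
pose u : 'cV[C]_m := \col_i x (mxtens_index (i, a)) 0.
pose v : 'cV[C]_m := const_mx 1.
have e1 : (bsum x) a 0 = bf 1%:M v u.
  by rewrite bf1E !mxE; apply: eq_bigr => i _; rewrite !mxE conjC1 mul1r.
have e2 : nsq v = m%:R.
  rewrite /nsq (eq_bigr (fun _ => 1)) ?sumr_const ?card_ord //.
  by move=> i _; rewrite mxE ComplexField.Normc.normc1 expr1n.
have e3 : nsq u = \sum_(i < m) normc (x (mxtens_index (i, a)) 0) ^+ 2.
  by apply: eq_bigr => i _; rewrite mxE.
by rewrite e1 -e2 -e3 mulrC CS1.
Qed.

Lemma tens_mulE m n (C0 : 'M[C]_n) (c : C) x i a :
  (c *: tensmx (onesmx R m) C0 *m x) (mxtens_index (i, a)) 0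
  = c * (C0 *m bsum x) a 0.
Proof.
rewrite mxE sum_tens [in RHS]mxE big_distrr /=.
under [RHS]eq_bigr => b _ do rewrite mxE big_distrr /= big_distrr /=.
rewrite [RHS]exchange_big /=; apply: eq_bigr => j _; apply: eq_bigr => b _.
by rewrite !mxE !mxtens_indexK /=; ring.
Qed.

Lemma nsq_tens_mul m n (C0 : 'M[C]_n) (t : R) x :
  nsq (t%:C%C *: tensmx (onesmx R m) C0 *m x)
  = m%:R * t ^+ 2 * nsq (C0 *m bsum x).
Proof.
rewrite nsq_tens; under eq_bigr => i _ do under eq_bigr => a _ do
  rewrite tens_mulE ComplexField.Normc.normcM normcR exprMn real_normK ?num_real //.
rewrite sumr_const card_ord -mulr_sumr /nsq -[in LHS]mulr_natl; ring.
Qed.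

Lemma opnorm_tens m n (C0 : 'M[C]_n) : (0 < m)%N ->
  opnorm (((m%:R : R)^-1)%:C%C *: tensmx (onesmx R m) C0) = opnorm C0.
Proof.
move=> m0; set T := _ *: _.
have mp : 0 < (m%:R : R) by rewrite ltr0n.
apply/le_anti/andP; split.
  apply: opnorm_le; first exact: opnorm_ge0.
  move=> x x1; apply: vnorm_le_c; first exact: opnorm_ge0.
  rewrite nsq_tens_mul.
  have h1 := opnorm_bound2 C0 (bsum x).
  have h2 := bsum_bound x.
  have hx : nsq x = 1 by rewrite -vnorm_sq x1 expr1n.
  rewrite hx mulr1 in h2.
  have hN := opnorm_ge0 C0.
  have hs := nsq_ge0 (bsum x).
  apply: (le_trans (ler_wpM2l _ h1)); first by rewrite mulr_ge0 ?sqr_ge0 ?ler0n.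
  set M := (m%:R : R) in mp h2 *; set t := M^-1; set N := opnorm C0 in hN *.
  set S := nsq (bsum x) in hs h2 *.
  have mt : M * t = 1 by rewrite /t mulfV // gt_eqF.
  have t0 : 0 <= t by rewrite invr_ge0 ltW.
  have -> : M * t ^+ 2 * (N ^+ 2 * S) = t * (N ^+ 2 * S) by rewrite expr2 !mulrA mt mul1r.
  apply: (le_trans (y := t * (N ^+ 2 * M))); first by rewrite ler_wpM2l // ler_wpM2l ?sqr_ge0.
  by rewrite mulrCA [t * M]mulrC mt mulr1.
apply: opnorm_le; first exact: opnorm_ge0.
move=> z z1; apply: vnorm_le_c; first exact: opnorm_ge0.
set M := (m%:R : R) in mp *; set t := M^-1.
have mt : M * t = 1 by rewrite /t mulfV // gt_eqF.
pose x : 'cV[C]_(m * n) := \col_k (t%:C%C * z (mxtens_unindex k).2 0).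
have bx : bsum x = z.
  apply/matrixP => a b; rewrite [b]ord1 mxE.
  under eq_bigr => i _ do rewrite mxE mxtens_indexK /=.
  rewrite sumr_const card_ord -mulr_natl mulrA -(rmorph_nat (real_complex R)) /=.
  by rewrite -rmorphM /= -/M mt mul1r.
have nx : nsq x = t.
  rewrite nsq_tens; under eq_bigr => i _ do under eq_bigr => a _ do
    rewrite mxE mxtens_indexK /= ComplexField.Normc.normcM normcR exprMn.
  rewrite sumr_const card_ord -mulr_sumr -/(nsq z) -vnorm_sq z1 expr1n mulr1.
  by rewrite -mulr_natl -/M real_normK ?num_real // expr2 mulrA mt mul1r.
have := opnorm_bound2 T x; rewrite /T nsq_tens_mul bx nx.
set P := nsq (C0 *m z); set N := opnorm _.
have -> : M * t ^+ 2 * P = t * P by rewrite expr2 !mulrA mt mul1r.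
have t0 : 0 < t by rewrite invr_gt0.
by rewrite [X in _ <= X]mulrC ler_pM2l.
Qed.

Lemma nsq_delta k (j : 'I_k) : nsq (delta_mx j 0 : 'cV[C]_k) = 1.
Proof.
rewrite /nsq (bigD1 j) //= big1 ?addr0.
  by rewrite mxE !eqxx ComplexField.Normc.normc1 expr1n.
by move=> a /negbTE aj; rewrite mxE aj ComplexField.Normc.normc0 expr0n.
Qed.

Lemma qf_conj k (U M : 'M[C]_k) z : qf (U *m M *m adjmx U) z = qf M (adjmx U *m z).
Proof. by rewrite /qf /bf adjmxM adjmxK !mulmxA. Qed.

Lemma bf1_rank1 k (y z : 'cV[C]_k) : (adjmx y *m z) 0 0 = bf 1%:M y z.
Proof. by rewrite /bf mulmx1. Qed.

Lemma qf_rank1 k (y z : 'cV[C]_k) : qf (y *m adjmx y) z = (bf 1%:M y z)^* * bf 1%:M y z.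
Proof.
rewrite /qf /bf !mulmxA -(mulmxA (adjmx z *m y)) mxE big_ord1 !mulmx1.
by have := psd_bf (@psd1 k) z y; rewrite /bf !mulmx1 => ->.
Qed.

Lemma bf1_delta k (j : 'I_k) (w : 'cV[C]_k) : bf 1%:M (delta_mx j 0) w = w j 0.
Proof.
rewrite bf1E (bigD1 j) //= big1 ?addr0; first by rewrite mxE !eqxx conjC1 mul1r.
by move=> a /negbTE aj; rewrite mxE aj conjC0 mul0r.
Qed.

Lemma qf_diag k (d : 'rV[C]_k) w :
  qf (diag_mx d) w = \sum_j d 0 j * (normc (w j 0) ^+ 2)%:C%C.
Proof.
rewrite /qf bfE; apply: eq_bigr => a _.
rewrite (bigD1 a) //= big1 ?addr0; last first.
  by move=> b /negbTE ba; rewrite mxE eq_sym ba mulr0n mulr0 mul0r.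
by rewrite mxE eqxx mulr1n normc_sqC; ring.
Qed.

Lemma nsq_diag_le k (d : 'rV[C]_k) w (l : R) : 0 <= l ->
  (forall j, normc (d 0 j) <= l) -> nsq (diag_mx d *m w) <= l ^+ 2 * nsq w.
Proof.
move=> l0 H; rewrite /nsq mulr_sumr; apply: ler_sum => j _.
rewrite mul_diag_mx mxE ComplexField.Normc.normcM exprMn ler_wpM2r ?sqr_ge0 //.
by rewrite ler_pXn2r ?nnegrE ?normc_ge0.
Qed.

Lemma rank1_mul k (y z : 'cV[C]_k) : y *m adjmx y *m z = bf 1%:M y z *: y.
Proof.
rewrite -mulmxA [adjmx y *m z]mx11_scalar bf1_rank1 mul_mx_scalar //.
Qed.

Lemma had_sub k (X Y Z : 'M[C]_k) (c : C) :
  hadamard X (Y - c *: Z) = hadamard X Y - c *: hadamard X Z.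
Proof. by apply/matrixP => a b; rewrite !mxE; ring. Qed.

Lemma qf_bf1 k (P : 'M[C]_k) v : qf P v = bf 1%:M v (P *m v).
Proof. by rewrite /qf /bf mulmx1 mulmxA. Qed.

Lemma top_eig k (B' : 'M[C]_k) : psd B' -> opnorm B' = 1 ->
  exists (x : 'cV[C]_k) (lam : R),
    [/\ nsq x = 1, 1 <= lam & psd (B' - lam%:C%C *: (x *m adjmx x))].
Proof.
move=> HB Bn1.
have [U [d [UU UU' BE d0]]] := psd_spectral HB.
have kpos : (0 < k)%N.
  rewrite lt0n; apply/negP => /eqP k0.
  have : opnorm B' <= 0.
    apply: opnorm_le => // x x1; exfalso.
    have : nsq x = 0 by rewrite /nsq big1 // => -[i Hi]; exfalso; move: Hi; rewrite k0.
    by move=> h; move: x1; rewrite vnormE h sqrtr0 => /eqP; rewrite eq_sym oner_eq0.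
  by rewrite Bn1 ler10.
pose i0 : 'I_k := Ordinal kpos.
pose j0 := [arg max_(j > i0) complex.Re (d 0 j)]%O.
have dmax : forall j, complex.Re (d 0 j) <= complex.Re (d 0 j0).
  by rewrite /j0; case: arg_maxP => //= j _ H i; apply: H.
have dreal : forall j, d 0 j = (complex.Re (d 0 j))%:C%C by move=> j; apply: ge0_realC.
have dge0 : forall j, 0 <= complex.Re (d 0 j) by move=> j; rewrite -ler0c -dreal.
set lam := complex.Re (d 0 j0).
have UUa : adjmx (adjmx U) *m adjmx U = 1%:M by rewrite adjmxK.
have c1 : forall z, nsq (B' *m z) <= lam ^+ 2 * nsq z.
  move=> z; rewrite BE -!mulmxA nsq_isom // -(nsq_isom z UUa).
  apply: nsq_diag_le; first exact: dge0.
  by move=> j; rewrite dreal normcR ger0_norm.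
have lam1 : 1 <= lam.
  rewrite -Bn1; apply: opnorm_le; first exact: dge0.
  move=> z z1; apply: vnorm_le_c; first exact: dge0.
  by rewrite -(mulr1 (lam ^+ 2)) -(expr1n _ 2) -z1 vnorm_sq.
pose e : 'cV[C]_k := delta_mx j0 0.
pose x : 'cV[C]_k := U *m e.
exists x, lam; split => //.
  by rewrite /x nsq_isom // nsq_delta.
move=> z; change (0 <= qf (B' - lam%:C%C *: (x *m adjmx x)) z); rewrite qfB qfZ.
have -> : x *m adjmx x = U *m (e *m adjmx e) *m adjmx U.
  by rewrite /x adjmxM !mulmxA.
rewrite qf_conj qf_rank1 /e bf1_delta {1}BE qf_conj qf_diag (bigD1 j0) //=.
rewrite -/lam dreal -/lam normc_sqC [_^* * _]mulrC.
have -> : forall a b c : C, a * b + c - a * b = c by move=> *; ring.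
apply: sumr_ge0 => j _; apply: mulr_ge0 => //; rewrite ler0c sqr_ge0 //.
Qed.

Lemma rank1_reduce m n (A : 'M[C]_n) (B' : 'M[C]_(m * n)) (x : 'cV[C]_(m * n)) (lam : R) :
  (0 < m)%N -> psd A -> psd B' -> nsq x = 1 -> 1 <= lam ->
  psd (B' - lam%:C%C *: (x *m adjmx x)) ->
  exists B, [/\ psd B, opnorm B = 1 &
                opnorm (hadamard A B) <= opnorm (hadamard (blockrep m A) B')].
Proof.
move=> m0 HA HB' nx lam1 Hsub.
pose s a := \sum_(i < m) normc (x (mxtens_index (i, a)) 0) ^+ 2.
have s0 : forall a, 0 <= s a by move=> a; apply: sumr_ge0 => i _; rewrite sqr_ge0.
pose y : 'cV[C]_n := \col_a (Num.sqrt (s a))%:C%C.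
have ny : nsq y = 1.
  rewrite -nx nsq_tens exchange_big /= /nsq; apply: eq_bigr => a _.
  by rewrite mxE normcR ger0_norm ?sqrtr_ge0 // sqr_sqrtr.
have y2 : forall a, y a 0 ^+ 2 = (s a)%:C%C.
  by move=> a; rewrite mxE -rmorphXn /= sqr_sqrtr.
have yr : forall a, (y a 0)^* = y a 0 by move=> a; rewrite mxE conjR.
pose B := y *m adjmx y.
have HBp : psd B.
  by move=> z; change (0 <= qf B z); rewrite qf_rank1 mulrC mul_conjC_ge0.
have bfyy : bf 1%:M y y = 1.
  by have := nsqC y; rewrite ny /qf => <-.
have nB : opnorm B = 1.
  apply/le_anti/andP; split.
    apply: opnorm_le => // z z1; apply: vnorm_le_c => //.
    rewrite rank1_mul nsqZ ny mulr1 expr1n.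
    by have := CS1 y z; rewrite ny mulr1 -vnorm_sq z1 expr1n.
  by have := opnorm_bound B y; rewrite rank1_mul bfyy scale1r vnormE ny sqrtr1 mulr1.
exists B; split => //.
set P := hadamard (blockrep m A) B'; set Q := hadamard A B.
have HAb : psd (blockrep m A) := (psd_tens A m0).2 HA.
have HP : psd P := schur HAb HB'.
have HQ : psd Q := schur HA HBp.
have N0 : 0 <= opnorm P := opnorm_ge0 P.
set N := opnorm P in N0 *.
have K : forall v, qf Q v <= (N * nsq v)%:C%C.
  move=> v.
  pose t a := if y a 0 == 0 then 0 else v a 0 / y a 0.
  pose v' : 'cV[C]_(m * n) := \col_k (x k 0 * t (mxtens_unindex k).2).
  have K1 : qf (hadamard (blockrep m A) (x *m adjmx x)) v' = qf Q v.
    rewrite !qf_had_rank1 /blockrep qf_tens; congr qf.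
    apply/matrixP => a b; rewrite [b]ord1 !mxE conjR.
    have ya_def : y a 0 = (Num.sqrt (s a))%:C%C by rewrite mxE.
    under eq_bigr => i _ do rewrite !mxE mxtens_indexK /= mulrA -normc_sqC.
    rewrite -big_distrl /= -rmorph_sum /= -/(s a) -ya_def -y2 /t.
    case: eqP => [ya|ya]; first by rewrite ya mulr0 mul0r.
    by field; apply/eqP.
  have K2 : nsq v' <= nsq v.
    rewrite nsq_tens exchange_big /=; apply: ler_sum => a _.
    under eq_bigr => i _ do rewrite mxE mxtens_indexK /= ComplexField.Normc.normcM exprMn.
    rewrite -mulr_suml -/(s a) /t.
    case: eqP => [ya|ya]; first by rewrite ComplexField.Normc.normc0 expr0n mulr0 sqr_ge0.
    rewrite ComplexField.Normc.normcM ComplexField.Normc.normcV exprMn.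
    have ny2 : normc (y a 0) ^+ 2 = s a.
      by rewrite mxE normcR ger0_norm ?sqrtr_ge0 // sqr_sqrtr.
    have sa : s a != 0.
      by apply/eqP => sa; apply: ya; rewrite mxE sa sqrtr0.
    by rewrite exprVn ny2 mulrCA mulfV // mulr1.
  have K3 : lam%:C%C * qf (hadamard (blockrep m A) (x *m adjmx x)) v' <= qf P v'.
    have h : 0 <= qf (hadamard (blockrep m A) (B' - lam%:C%C *: (x *m adjmx x))) v'.
      exact: (schur HAb Hsub v').
    by rewrite had_sub qfB qfZ subr_ge0 in h.
  have HPv : 0 <= qf P v' by apply: HP.
  have HQv : 0 <= qf Q v by apply: HQ.
  have eP := ge0_realC HPv; have eQ := ge0_realC HQv.
  set p := complex.Re (qf P v') in eP; set q := complex.Re (qf Q v) in eQ.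
  have p0 : 0 <= p by rewrite -ler0c -eP.
  have q0 : 0 <= q by rewrite -ler0c -eQ.
  have K4 : p <= N * nsq v'.
    have h := CS1 v' (P *m v').
    rewrite -qf_bf1 eP normcR ger0_norm // in h.
    have h2 := opnorm_bound2 P v'; rewrite -/N in h2.
    have hv := nsq_ge0 v'.
    have h3 : p ^+ 2 <= (N * nsq v') ^+ 2.
      apply: (le_trans h); rewrite exprMn [nsq v' ^+ 2]expr2 mulrA.
      by rewrite ler_wpM2r.
    have hNv : 0 <= N * nsq v' by rewrite mulr_ge0.
    nra.
  rewrite K1 eQ in K3; rewrite eP in K3.
  rewrite -rmorphM lecR in K3.
  rewrite eQ lecR.
  have hv := nsq_ge0 v'.
  nra.
apply: opnorm_le => // z z1; apply: vnorm_le_c => //.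
have hz : nsq z = 1 by rewrite -vnorm_sq z1 expr1n.
set w := Q *m z.
have cs := psd_CS z w HQ.
have ew : bf Q w z = (nsq w)%:C%C.
  by rewrite nsqC /bf /qf /bf mulmx1 -mulmxA.
rewrite ew normCK conjR -rmorphM in cs.
have Kz := K z; have Kw := K w; rewrite hz mulr1 in Kz.
have Qz0 : 0 <= qf Q z by apply: HQ.
have Qw0 : 0 <= qf Q w by apply: HQ.
have := le_trans cs (ler_pM Qz0 Qw0 Kz Kw).
rewrite -rmorphM lecR => h.
have hw := nsq_ge0 w.
nra.
Qed.

Lemma a_map m n (A B : 'M[C]_n) : (0 < m)%N -> psd B -> opnorm B = 1 ->
  exists B', [/\ psd B', opnorm B' = 1 &
     opnorm (hadamard (blockrep m A) B') = opnorm (hadamard A B)].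
Proof.
move=> m0 HB nB.
exists (((m%:R : R)^-1)%:C%C *: tensmx (onesmx R m) B); split.
- apply: psd_scale; first by rewrite ler0c invr_ge0 ler0n.
  exact: (psd_tens B m0).2.
- by rewrite opnorm_tens.
have -> : hadamard (blockrep m A) (((m%:R : R)^-1)%:C%C *: tensmx (onesmx R m) B)
   = ((m%:R : R)^-1)%:C%C *: tensmx (onesmx R m) (hadamard A B).
  by apply/matrixP => k l; rewrite !mxE; ring.
by rewrite opnorm_tens.
Qed.

Lemma b_map m n (A : 'M[C]_n) (B' : 'M[C]_(m * n)) : (0 < m)%N -> psd A ->
  psd B' -> opnorm B' = 1 ->
  exists B, [/\ psd B, opnorm B = 1 &
                opnorm (hadamard A B) <= opnorm (hadamard (blockrep m A) B')].
Proof.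
move=> m0 HA HB nB.
have [x [lam [nx l1 Hs]]] := top_eig HB nB.
exact: rank1_reduce m0 HA HB nx l1 Hs.
Qed.

End Aux.

Theorem mainTheorem3 (R : realType) (n m : nat) (A : 'M[R[i]]_n) :
  (0 < m)%N -> psd A ->
  Iidx (blockrep m A) = Iidx A /\ Isp (blockrep m A) = Isp A.
Proof.
Local Open Scope classical_set_scope.
move=> m0 HA; split; first exact: Iidx_blockrep.
rewrite /Isp.
set S := (X in _ = inf X); set Sm := (X in inf X = _).
have lbS : has_lbound S by exists 0 => s [B _ <-]; exact: opnorm_ge0.
have lbSm : has_lbound Sm by exists 0 => s [B _ <-]; exact: opnorm_ge0.
have toSm : forall s, S s -> Sm s.
  move=> s [B [HB nB] <-].
  have [B' [HB' nB' e]] := a_map A m0 HB nB.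
  by exists B' => //; rewrite e.
have toS : forall t, Sm t -> exists2 s, S s & s <= t.
  move=> t [B' [HB' nB'] <-].
  have [B [HB nB le]] := b_map m0 HA HB' nB'.
  by exists (opnorm (hadamard A B)) => //; exists B.
have [[s Ss]|none] := pselect (exists s, S s).
  have neSm : exists t, Sm t by exists s; apply: toSm.
  apply/le_anti/andP; split.
    apply: lb_le_inf; first by exists s.
    by move=> s' /toSm Ss'; apply: ge_inf.
  apply: lb_le_inf => // t /toS [s' Ss' le].
  by apply: le_trans le; apply: ge_inf.
have -> : S = set0 by apply/seteqP; split => // s' Ss'; apply: none; exists s'.
have -> : Sm = set0.
  by apply/seteqP; split => // t /toS [s' Ss' _]; apply: none; exists s'.
by [].
Qed.
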